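(* In the interval covering setting with known but possibly unequal interval lengths and a covering interval of length $1$, for every $\varepsilon\in(0,1)$ the approximation ratio of the Weighted-Median mechanism is at least $1/\varepsilon$.
   Context: Each agent $i$ has an interval $I_i=[s_i,t_i]$ on the real line whose length $|I_i|>0$ is publicly known; the agents are indexed so that $s_1\le s_2\le\dots\le s_n$. A covering interval $C$ of length $1$ is placed; the cost of agent $i$ is $|I_i|-|I_i\cap C|$ and the social cost is the sum of the agents' costs. For an agent $i$, let $L(i)$ be the set of agents before $i$ in this order. The Weighted-Median mechanism places $C$ at the starting position $s_{i^*}$ (i.e., $C=[s_{i^*},s_{i^*}+1]$) of the leftmost agent $i^*$ such that $\sum_{i\in L(i^* )}|I_i|+|I_{i^*}|\ge\frac12\sum_{i}|I_i|$ and $\sum_{i\in L(i^* )}|I_i|<\frac12\sum_i|I_i|$. The approximation ratio is the supremum over instances of the mechanism's social cost divided by the minimum social cost over all placements of $C$. *)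

(* Defs.v *)
From Stdlib Require Import Reals Lra List.
Open Scope R_scope.

(* An instance: n agents, agent i (0 <= i < n) has interval [s i, t i]. *)

Definition sumR (n : nat) (f : nat -> R) : R :=
  fold_right Rplus 0 (map f (seq 0 n)).

Definition overlap (a b c d : R) : R := Rmax 0 (Rmin b d - Rmax a c).

Definition len (s t : nat -> R) (i : nat) : R := t i - s i.

Definition agent_cost (s t : nat -> R) (x : R) (i : nat) : R :=
  len s t i - overlap (s i) (t i) x (x + 1).

Definition social_cost (n : nat) (s t : nat -> R) (x : R) : R :=
  sumR n (agent_cost s t x).

Definition prefix_len (s t : nat -> R) (i : nat) : R := sumR i (len s t).

Definition wm_cond (n : nat) (s t : nat -> R) (i : nat) : Prop :=
  (i < n)%nat /\
  prefix_len s t i + len s t i >= sumR n (len s t) / 2 /\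
  prefix_len s t i < sumR n (len s t) / 2.

(* i is the agent selected by the Weighted-Median mechanism:
   the leftmost agent satisfying the weighted-median condition;
   the mechanism places C = [s i, s i + 1]. *)
Definition wm_agent (n : nat) (s t : nat -> R) (i : nat) : Prop :=
  wm_cond n s t i /\ forall j, (j < i)%nat -> ~ wm_cond n s t j.

Definition valid_instance (n : nat) (s t : nat -> R) : Prop :=
  (1 <= n)%nat /\
  (forall i, (i < n)%nat -> s i < t i) /\
  (forall i j, (i <= j < n)%nat -> s i <= s j).

(* Main.v *)
Require Import Defs.
From Stdlib Require Import Reals Lra Lia.
Open Scope R_scope.

Definition s0 (i : nat) : R := match i with O => 0 | S _ => 1/4 end.
Definition t0 (_ : nat) : R := 1.

Theorem proposition1 (eps : R) (Heps : 0 < eps < 1) :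
  exists (n : nat) (s t : nat -> R) (i : nat),
    valid_instance n s t /\ wm_agent n s t i /\
    0 < social_cost n s t (s i) /\
    exists x : R, social_cost n s t x <= eps * social_cost n s t (s i).
Proof.
  assert (C1 : social_cost 3 s0 t0 (s0 1%nat) = 1/4).
  { unfold social_cost, sumR, agent_cost, overlap, len, s0, t0; simpl.
    unfold Rmax, Rmin; repeat destruct Rle_dec; lra. }
  assert (C0 : social_cost 3 s0 t0 0 = 0).
  { unfold social_cost, sumR, agent_cost, overlap, len, s0, t0; simpl.
    unfold Rmax, Rmin; repeat destruct Rle_dec; lra. }
  exists 3%nat, s0, t0, 1%nat.
  split; [|split; [|split]].
  - split; [lia|split].
    + intros i _; unfold s0, t0; destruct i; lra.
    + intros i j H; unfold s0; destruct i, j; try lra; lia.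
  - unfold wm_agent, wm_cond, prefix_len, sumR, len, s0, t0; simpl. split.
    + split; [lia|split; lra].
    + intros j Hj [_ [H1 H2]]. assert (j = 0%nat) by lia. subst. simpl in H1. lra.
  - rewrite C1; lra.
  - exists 0. rewrite C0, C1. lra.
Qed.
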